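(* Let $\mathcal{E}=[\theta,u]$ be an interval effect algebra that generates its ordered linear space, has an order-determining set of states, and is unrestricted. Let $\mathcal{I}$ be an operation from $\mathcal{E}$ to $\mathcal{E}$ and $a\in\mathcal{E}$ with $\mathcal{I}^*(u)=a$. Then the following are equivalent: (i) $a$ is $\mathcal{I}$-repeatable, i.e. $\mathcal{I}^*(a)=a$; (ii) $a[\mathcal{I}]a=a$; (iii) $a[\mathcal{I}]a'=\theta$; (iv) $a[\mathcal{I}]b=\theta$ for every $b\in\mathcal{E}$ with $a\perp b$; (v) $\mathcal{I}^*(b)\le\mathcal{I}^*(a)$ for all $b\in\mathcal{E}$; (vi) $\mathcal{I}(\mathcal{I}(s))(u)=\mathcal{I}(s)(u)$ for all $s\in\mathcal{S}(\mathcal{E})$, and $\mathcal{I}^*(u)=a$.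
   Context: Let $V$ be a real vector space with zero $\theta$ and $K\subseteq V$ a positive cone ($\mathbb{R}^+K\subseteq K$, $K+K\subseteq K$, $K\cap(-K)=\{\theta\}$), ordered by $x\le y$ iff $y-x\in K$. For $u\in K$, $u\ne\theta$, $\mathcal{E}=[\theta,u]=\{x\in K:x\le u\}$; for $a,b\in\mathcal{E}$, $a\perp b$ means $a+b\le u$; the complement of $a$ is $a'=u-a$. $\mathcal{E}$ generates $V$ means $K=\mathbb{R}^+\mathcal{E}$ and $V=K-K$. A state is $s\colon\mathcal{E}\to[0,1]$ with $s(u)=1$ and $s(a+b)=s(a)+s(b)$ whenever $a\perp b$; $\mathcal{S}(\mathcal{E})$ is the set of all states, assumed order-determining: $a\le b$ iff $s(a)\le s(b)$ for all $s$. Affine = preserves finite convex combinations. Unrestricted: every affine $f\colon\mathcal{S}(\mathcal{E})\to[0,1]$ is of the form $f(s)=s(c)$ for some $c\in\mathcal{E}$. A substate is $\lambda s$, $\lambda\in[0,1]$, $s\in\mathcal{S}(\mathcal{E})$. An operation on $\mathcal{E}$ is an affine map $\mathcal{I}$ from $\mathcal{S}(\mathcal{E})$ to substates on $\mathcal{E}$; it is extended to substates by $\mathcal{I}(\lambda s)=\lambda\mathcal{I}(s)$. Its dual $\mathcal{I}^*\colon\mathcal{E}\to\mathcal{E}$ is the unique affine map with $s[\mathcal{I}^*(b)]=\mathcal{I}(s)(b)$ for all $s\in\mathcal{S}(\mathcal{E})$, $b\in\mathcal{E}$. When $\mathcal{I}^*(u)=a$ ($\mathcal{I}$ measures $a$),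 the sequential product relative to $\mathcal{I}$ is $a[\mathcal{I}]b=\mathcal{I}^*(b)$ for $b\in\mathcal{E}$. *)

(* Defs.v *)
From HB Require Import structures.
From mathcomp Require Import all_boot all_order all_algebra.
From mathcomp Require Import reals.
Set Implicit Arguments. Unset Strict Implicit. Unset Printing Implicit Defensive.
Import Order.TTheory GRing.Theory Num.Theory.
Local Open Scope ring_scope.

Section EffectAlgebra.
Context {R : realType} {V : lmodType R}.

Definition positive_cone (K : V -> Prop) : Prop :=
  [/\ (forall (r : R) x, 0 <= r -> K x -> K (r *: x)),
      (forall x y, K x -> K y -> K (x + y)) &
      (forall x, K x -> K (- x) -> x = 0)].

Definition cle (K : V -> Prop) (x y : V) : Prop := K (y - x).

Definition in_interval (K : V -> Prop) (u x : V) : Prop := K x /\ cle K x u.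

Definition Eff (K : V -> Prop) (u : V) : Type := {x : V | in_interval K u x}.

Definition perp (K : V -> Prop) (u : V) (a b : Eff K u) : Prop :=
  cle K (proj1_sig a + proj1_sig b) u.

Definition generates (K : V -> Prop) (u : V) : Prop :=
  (forall x, K x <-> exists (r : R) (e : V), 0 <= r /\ in_interval K u e /\ x = r *: e)
  /\ (forall v, exists x y, K x /\ K y /\ v = x - y).

Definition is_state (K : V -> Prop) (u : V) (s : Eff K u -> R) : Prop :=
  [/\ (forall e, 0 <= s e <= 1),
      (forall e, proj1_sig e = u -> s e = 1) &
      (forall a b c : Eff K u, proj1_sig c = proj1_sig a + proj1_sig b ->
          s c = s a + s b)].

Definition order_determining (K : V -> Prop) (u : V) : Prop :=
  forall a b : Eff K u,
    cle K (proj1_sig a) (proj1_sig b) <->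
    (forall s, is_state s -> s a <= s b).

Definition cvx (K : V -> Prop) (u : V) (l : R) (s t : Eff K u -> R) : Eff K u -> R :=
  fun e => l * s e + (1 - l) * t e.

(* affine real functions on the state space
   (binary convex combinations generate all finite ones) *)
Definition affine_on_states (K : V -> Prop) (u : V) (f : (Eff K u -> R) -> R) : Prop :=
  forall (l : R) s t, 0 <= l <= 1 -> is_state s -> is_state t ->
    f (cvx l s t) = l * f s + (1 - l) * f t.

Definition unrestricted (K : V -> Prop) (u : V) : Prop :=
  forall f : (Eff K u -> R) -> R, affine_on_states f ->
    (forall s, is_state s -> 0 <= f s <= 1) ->
    exists c : Eff K u, forall s, is_state s -> f s = s c.

Definition is_substate (K : V -> Prop) (u : V) (t : Eff K u -> R) : Prop :=
  exists (l : R) s, 0 <= l <= 1 /\ is_state s /\ t = (fun e => l * s e).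

(* an operation: affine map from states to substates, extended to
   substates by I(λ s) = λ I(s) *)
Definition is_operation (K : V -> Prop) (u : V) (I : (Eff K u -> R) -> (Eff K u -> R)) : Prop :=
  [/\ (forall s, is_state s -> is_substate (I s)),
      (forall (l : R) s t, 0 <= l <= 1 -> is_state s -> is_state t ->
          I (cvx l s t) = cvx l (I s) (I t)) &
      (forall (l : R) s, 0 <= l <= 1 -> is_state s ->
          I (fun e => l * s e) = (fun e => l * I s e))].

Definition is_dual (K : V -> Prop) (u : V) (I : (Eff K u -> R) -> (Eff K u -> R))
  (Istar : Eff K u -> Eff K u) : Prop :=
  forall s b, is_state s -> s (Istar b) = I s b.

(* sequential product relative to I (where I measures a): a[I]b = I*(b) *)
Definition seq_prod (K : V -> Prop) (u : V) (Istar : Eff K u -> Eff K u) (a b : Eff K u) : Eff K u :=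
  Istar b.

End EffectAlgebra.

(* Main.v *)
Require Import Defs.
From HB Require Import structures.
From mathcomp Require Import all_boot all_order all_algebra.
From mathcomp Require Import reals.
From Stdlib Require Import ProofIrrelevance.
Import Order.TTheory GRing.Theory Num.Theory.
Local Open Scope ring_scope.

Set Implicit Arguments.
Section H.
Variables (R : realType) (V : lmodType R) (K : V -> Prop) (u : V).
Hypothesis cone : positive_cone K.
Hypothesis Ku : K u.
Hypothesis od : order_determining K u.

Lemma K0 : K 0.
Proof. case: cone => Hs _ _. by rewrite -(scale0r u); apply: Hs. Qed.

Lemma Kadd x y : K x -> K y -> K (x + y).
Proof. by case: cone => _ Ha _; apply: Ha. Qed.

Lemma antisym x y : cle K x y -> cle K y x -> x = y.
Proof.
rewrite /cle => H1 H2; case: cone => _ _ Hn.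
have : y - x = 0 by apply: Hn => //; rewrite opprB.
by move/eqP; rewrite subr_eq0 => /eqP.
Qed.

Lemma eff_eq (x y : Eff K u) : proj1_sig x = proj1_sig y -> x = y.
Proof.
case: x => x px; case: y => y py /= E; subst y; f_equal; apply: proof_irrelevance.
Qed.

Lemma state_eq (x y : Eff K u) :
  (forall s, is_state s -> s x = s y) -> proj1_sig x = proj1_sig y.
Proof.
move=> H; apply: antisym; apply/od => s Hs; rewrite H //.
Qed.

Lemma Kval (x : Eff K u) : K (proj1_sig x).
Proof. exact: (proj1 (proj2_sig x)). Qed.

Lemma uin : in_interval K u u.
Proof. by split => //; rewrite /cle subrr; apply: K0. Qed.

Definition uEff : Eff K u := exist _ u uin.

Lemma compl_in (x : Eff K u) : in_interval K u (u - proj1_sig x).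
Proof.
split; first exact: (proj2 (proj2_sig x)).
rewrite /cle opprB addrC subrK; exact: Kval.
Qed.

Definition compl (x : Eff K u) : Eff K u := exist _ _ (compl_in x).

Lemma state_compl s x : is_state s -> s (compl x) = 1 - s x.
Proof.
case=> _ H1 H2.
have := H2 (compl x) x uEff; rewrite /= subrK => /(_ erefl).
rewrite H1 // => ->; by rewrite addrK.
Qed.

Lemma sum_in (x y : Eff K u) :
  (forall s, is_state s -> s x + s y <= 1) ->
  in_interval K u (proj1_sig x + proj1_sig y).
Proof.
move=> H; split; first by apply: Kadd; apply: Kval.
have : cle K (proj1_sig x) (proj1_sig (compl y)).
  apply/od => s Hs; rewrite state_compl // lerBrDr; exact: H.
rewrite /cle /= => H'.
by rewrite opprD addrA [_ - proj1_sig y]addrC addrA [- _ + _]addrC.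
Qed.

Variables (I : (Eff K u -> R) -> (Eff K u -> R)) (Istar : Eff K u -> Eff K u).
Hypothesis Hop : is_operation I.
Hypothesis Hdual : is_dual I Istar.

Lemma I_add s (b1 b2 b : Eff K u) : is_state s ->
  proj1_sig b = proj1_sig b1 + proj1_sig b2 -> I s b = I s b1 + I s b2.
Proof.
move=> Hs E; case: Hop => Hsub _ _.
case: (Hsub s Hs) => l [s' [_ [[_ _ H3] ->]]].
by rewrite (H3 _ _ _ E) mulrDr.
Qed.

Lemma Istar_add (b1 b2 b : Eff K u) :
  proj1_sig b = proj1_sig b1 + proj1_sig b2 ->
  proj1_sig (Istar b) = proj1_sig (Istar b1) + proj1_sig (Istar b2).
Proof.
move=> E.
have Hin : in_interval K u (proj1_sig (Istar b1) + proj1_sig (Istar b2)).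
  apply: sum_in => s Hs; rewrite !Hdual // -(I_add _ _ _ Hs E) -Hdual //.
  by case: Hs => H _ _; case/andP: (H (Istar b)).
pose w : Eff K u := exist _ _ Hin.
have -> : proj1_sig (Istar b1) + proj1_sig (Istar b2) = proj1_sig w by [].
apply: state_eq => s Hs.
case: (Hs) => _ _ H3; rewrite (H3 (Istar b1) (Istar b2) w) //.
by rewrite !Hdual // (I_add _ _ _ Hs E).
Qed.

End H.
Unset Implicit Arguments.
Lemma E1 (R : realType) (V : lmodType R) (K : V -> Prop) (u : V)
  (I : (Eff K u -> R) -> (Eff K u -> R)) (Istar : Eff K u -> Eff K u)
  (uE a : Eff K u) :
  is_operation I -> is_dual I Istar -> Istar uE = a ->
  forall s, is_state s -> I (I s) uE = I s a.
Proof.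
move=> Hop Hdual Ha s Hs.
case: (Hop) => Hsub _ HopM.
case: (Hsub s Hs) => l [s' [Hl [Hs' Heq]]].
by rewrite Heq HopM //= -Hdual // Ha.
Qed.

Theorem theorem3p3 (R : realType) (V : lmodType R) (K : V -> Prop) (u : V)
  (I : (Eff K u -> R) -> (Eff K u -> R)) (Istar : Eff K u -> Eff K u)
  (uE a : Eff K u) :
  positive_cone K -> K u -> u <> 0 ->
  generates K u -> order_determining K u -> unrestricted K u ->
  is_operation I -> is_dual I Istar ->
  proj1_sig uE = u ->
  Istar uE = a ->
  let i := Istar a = a in
  let ii := seq_prod Istar a a = a in
  let iii := forall a' : Eff K u, proj1_sig a' = u - proj1_sig a ->
               proj1_sig (seq_prod Istar a a') = 0 in
  let iv := forall b : Eff K u, perp a b -> proj1_sig (seq_prod Istar a b) = 0 in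
  let v := forall b : Eff K u, cle K (proj1_sig (Istar b)) (proj1_sig (Istar a)) in
  let vi := (forall s, is_state s -> I (I s) uE = I s uE) /\ Istar uE = a in
  [/\ i <-> ii, i <-> iii, i <-> iv, i <-> v & i <-> vi].
Proof.
move=> cone Ku u0 gen od unr Hop Hdual HuE Ha i ii iii iv v vi.
have D : proj1_sig a = proj1_sig (Istar a) + proj1_sig (Istar (compl a)).
  rewrite -{1}Ha; apply: (@Istar_add R V K u cone Ku od I Istar Hop Hdual) => //.
  by rewrite HuE /= addrC subrK.
have mono : forall b, cle K (proj1_sig (Istar b)) (proj1_sig a).
  move=> b; rewrite /cle.
  have -> : proj1_sig a = proj1_sig (Istar b) + proj1_sig (Istar (compl b)).
    rewrite -{1}Ha; apply: (@Istar_add R V K u cone Ku od I Istar Hop Hdual) => //.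
    by rewrite HuE /= addrC subrK.
  by rewrite addrC addKr; apply: Kval.
have i_iii : i <-> iii.
  split.
    move=> Hi a' Ha'; rewrite /seq_prod.
    have -> : a' = compl a by apply: eff_eq.
    by move: D; rewrite Hi -{1}[proj1_sig a]addr0 => /addrI <-.
  move=> H; apply: eff_eq; rewrite D.
  by rewrite (H (compl a) erefl) addr0.
have iv_iii : iv -> iii.
  move=> H a' Ha'; apply: H; rewrite /perp /cle Ha'.
  rewrite [proj1_sig a + _]addrC subrK subrr.
  exact: (@K0 R V K u cone Ku).
have i_iv : i -> iv.
  move=> Hi b Hp.
  have Z : proj1_sig (Istar (compl a)) = 0 by apply: (proj1 i_iii Hi).
  have d_in : in_interval K u (u - (proj1_sig a + proj1_sig b)).
    split; first exact: Hp.
    rewrite /cle opprB addrC subrK; apply: Kadd => //; apply: Kval.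
  pose d : Eff K u := exist _ _ d_in.
  have := @Istar_add R V K u cone Ku od I Istar Hop Hdual b d (compl a).
  rewrite Z /= => /(_ _)/esym.
  have H1 : u - proj1_sig a = proj1_sig b + (u - (proj1_sig a + proj1_sig b)).
    rewrite opprD addrCA; congr (_ + _).
    by rewrite addrCA subrr addr0.
  move=> /(_ H1) /eqP; rewrite addr_eq0 => /eqP Hd.
  case: cone => _ _ Hn; rewrite /seq_prod; apply: Hn; first exact: Kval.
  rewrite Hd opprK; apply: Kval.
split.
- by [].
- exact: i_iii.
- split; [exact: i_iv | by move=> H; apply/i_iii/iv_iii].
- split.
    by move=> Hi b; rewrite Hi.
  move=> Hv; apply: eff_eq; apply: (@antisym R V K cone); first exact: mono.
  by have := Hv uE; rewrite Ha.
- split.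
    move=> Hi; split => // s Hs.
    by rewrite (@E1 R V K u I Istar uE a Hop Hdual Ha s Hs) -!Hdual // Hi Ha.
  case=> Hvi _; apply: eff_eq; apply: state_eq => // s Hs.
  by rewrite Hdual // -(@E1 R V K u I Istar uE a Hop Hdual Ha s Hs) Hvi // -Hdual // Ha.
Qed.
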